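(* Let $n\ge 2$. The function $\mathbf{H}:[0,1]^n\to[0,1]$ has no absorbing element, i.e. there is no $a\in[0,1]$ such that $\mathbf{H}(x_1,\dots,x_{i-1},a,x_{i+1},\dots,x_n)=a$ for every $i$ and all $x_j\in[0,1]$.
   Context: For $\mathbf{x}\in[0,1]^n$ let $x_{(1)}\ge\dots\ge x_{(n)}$ be its entries in decreasing order, and define the median $Med(\mathbf{x})=\frac12(x_{(k)}+x_{(k+1)})$ if $n=2k$ and $Med(\mathbf{x})=x_{(k+1)}$ if $n=2k+1$. Define $f_i(\mathbf{x})=\frac1n$ if $x_1=\dots=x_n$, and otherwise $f_i(\mathbf{x})=\frac{1}{n-1}\Big(1-\frac{|x_i-Med(\mathbf{x})|}{\sum_{j=1}^n|x_j-Med(\mathbf{x})|}\Big)$. Then $\mathbf{H}(\mathbf{x})=\sum_{i=1}^n f_i(\mathbf{x})\,x_i$. *)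

(* Defs.v *)
From mathcomp Require Import all_boot all_order all_algebra.
Set Implicit Arguments. Unset Strict Implicit. Unset Printing Implicit Defensive.
Import Order.TTheory GRing.Theory Num.Theory.
Local Open Scope ring_scope.

Section HDef.
Variable R : realFieldType.

(* entries of x sorted in decreasing order: x_(1) >= ... >= x_(n);
   x_(j) (1-based) is (sorted_desc x)`_(j-1) *)
Definition sorted_desc n (x : 'I_n -> R) : seq R :=
  sort (fun a b => b <= a) [seq x i | i <- enum 'I_n].

Definition Med n (x : 'I_n -> R) : R :=
  let s := sorted_desc x in
  let k := n./2 in
  if ~~ odd n then (s`_(k.-1) + s`_k) / 2%:R else s`_k.

Definition all_equal n (x : 'I_n -> R) : bool :=
  [forall i, forall j, x i == x j].

Definition f_weight n (x : 'I_n -> R) (i : 'I_n) : R :=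
  if all_equal x then n%:R^-1
  else (n.-1)%:R^-1 *
       (1 - `|x i - Med x| / \sum_(j < n) `|x j - Med x|).

Definition H n (x : 'I_n -> R) : R := \sum_(i < n) f_weight x i * x i.

End HDef.

Definition in01 (R : realFieldType) (a : R) : bool := (0 <= a) && (a <= 1).

(* Main.v *)
Require Import Defs.
From mathcomp Require Import all_boot all_order all_algebra.
From mathcomp Require Import ring lra.
Import Order.TTheory GRing.Theory Num.Theory.
Local Open Scope ring_scope.

Lemma med2 (R : realFieldType) (x : 'I_2 -> R) : Med x = (x ord0 + x ord_max) / 2%:R.
Proof.
rewrite /Med /=.
have Hp := perm_sort (fun a b : R => b <= a) [seq x i | i <- enum 'I_2].
have Sz : size (sorted_desc x) = 2%N by rewrite /sorted_desc size_sort size_map size_enum_ord.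
have E : \sum_(y <- sorted_desc x) y = \sum_(y <- [seq x i | i <- enum 'I_2]) y.
  by apply: perm_big; rewrite /sorted_desc perm_sort.
move: Sz E; rewrite /sorted_desc.
case: (sort _ _) => [|u [|v [|w s]]] //= _.
rewrite !big_cons big_nil /= enum_ordSl /= enum_ordSl /= enum_ord0 /= !big_cons big_nil.
rewrite !addr0 => ->; congr ((x _ + x _) / _); exact/val_inj.
Qed.

Lemma med2' (R : realFieldType) (x : 'I_2 -> R) (i j : 'I_2) :
  j != i -> Med x = (x i + x j) / 2%:R.
Proof.
rewrite med2; case: i => [[|[|i]] Hi] //; case: j => [[|[|j]] Hj] //= _.
- by congr ((x _ + x _) / _); apply/val_inj.
- by rewrite addrC; congr ((x _ + x _) / _); apply/val_inj.
Qed.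

Lemma main_m (R : realFieldType) (m : nat) (x : 'I_m.+2 -> R) (i j : 'I_m.+2) :
  j != i -> x i != x j -> (forall k, k != i -> x k = x j) -> H x != x i.
Proof.
move=> ji xij xk.
set M := Med x.
set S := \sum_(k < m.+2) `|x k - M|.
have naeq : ~~ all_equal x.
  by apply/negP => /forallP /(_ i) /forallP /(_ j); rewrite (negbTE xij).
have Spos : 0 < S.
  have h1 : `|x i - M| + `|x j - M| <= S.
    rewrite /S (bigD1 i) //= (bigD1 j) //= addrA lerDl.
    by apply: sumr_ge0 => k _.
  apply: (lt_le_trans _ h1).
  rewrite (distrC (x j)); apply: (lt_le_trans _ (ler_distD M (x i) (x j))).
  by rewrite normr_gt0 subr_eq0.
have fw : forall k, f_weight x k = (m.+1)%:R^-1 * (1 - `|x k - M| / S).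
  by move=> k; rewrite /f_weight (negbTE naeq).
have sum1 : \sum_k f_weight x k = 1.
  under eq_bigr do rewrite fw.
  rewrite -mulr_sumr sumrB sumr_const card_ord -mulr_suml -/S divff ?gt_eqF //.
  rewrite -natr1; field; by rewrite natr1 pnatr_eq0.
have Hx : H x = f_weight x i * x i + (1 - f_weight x i) * x j.
  rewrite /H (bigD1 i) //=; congr (_ + _).
  have -> : 1 - f_weight x i = \sum_(k < m.+2 | k != i) f_weight x k.
    by rewrite -sum1 (bigD1 i) //= addrC addrK.
  rewrite mulr_suml.
  by apply: eq_bigr => k ki; rewrite xk.
have fi1 : f_weight x i != 1.
  rewrite fw.
  have eqM : M = Med x by [].
  case: m x i j ji xij xk M S eqM naeq Spos fw sum1 Hx => [|m] x i j ji xij xk M S eqM naeq Spos fw sum1 Hx.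
  - apply/negP => /eqP h.
    have h2 : `|x i - M| / S = 0 by move: h; rewrite ?mulr1n invr1 mul1r; lra.
    move/eqP: h2; rewrite mulf_eq0 invr_eq0 (gt_eqF Spos) orbF normr_eq0 eqM (@med2' _ _ _ _ ji) subr_eq0 => /eqP h2.
    by apply: (negP xij); apply/eqP; lra.
  - apply/negP => /eqP h.
    have hc0 : 0 < (m.+2)%:R^-1 :> R by rewrite invr_gt0 ltr0n.
    have hc1 : (m.+2)%:R^-1 < 1 :> R by rewrite invf_lt1 ?ltr0n // ltr1n.
    have ht : 0 <= `|x i - M| / S by rewrite divr_ge0 // ltW.
    move: h hc0 hc1 ht; set c := (m.+2)%:R^-1; set d := `|x i - M| / S => h hc0 hc1 ht.
    nra.
rewrite Hx; apply: contra fi1 => /eqP h.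
have : (1 - f_weight x i) * (x j - x i) = 0 by rewrite mulrBr; lra.
move/eqP; rewrite mulf_eq0 !subr_eq0 [x j == _]eq_sym (negbTE xij) orbF eq_sym; by [].
Qed.

Theorem proposition13 (R : realFieldType) (n : nat) (hn : (2 <= n)%N) :
  ~ (exists a : R, in01 a /\
       forall (i : 'I_n) (x : 'I_n -> R),
         (forall j, in01 (x j)) -> x i = a -> H x = a).
Proof.
case: n hn => [|[|m]] // _ [a [ha habs]].
pose b : R := if a == 0 then 1 else 0.
pose x := fun k : 'I_m.+2 => if k == ord0 then a else b.
have hab : a != b.
  rewrite /b; case: (eqVneq a 0) => [->|h] //; by rewrite eq_sym oner_eq0.
have j1 : (lift ord0 ord0 : 'I_m.+2) != ord0 by [].
have := @main_m R m x ord0 (lift ord0 ord0) j1.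
rewrite /x (negbTE j1) eqxx => /(_ hab).
have -> : H (fun k : 'I_m.+2 => if k == ord0 then a else b) = a.
  apply: (habs ord0) => [k|]; last by rewrite eqxx.
  by case: (k == ord0) => //; rewrite /b /in01; case: (a == 0); rewrite ?ler01 ?lexx.
move=> h; have : a != a by apply: h => k kn; rewrite (negbTE kn).
by rewrite eqxx.
Qed.
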